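(* If $\mathcal F=\{f_1,\dots,f_M\}$ is a frame for $\mathbb C^N$ and $\mathbb M^{\mathcal F}$ is injective, then $M\ge 2N$.
   Context: A frame for $\mathbb C^N$ is a spanning family $\{f_1,\dots,f_M\}$, $\langle x,y\rangle=\sum_k x_k\overline{y_k}$. $\mathbb M^{\mathcal F}$ is injective means $|\langle x,f_k\rangle|=|\langle y,f_k\rangle|$ for all $k$ implies $y=cx$ for some $c\in\mathbb C$ with $|c|=1$. *)

(* Defs.v *)
From HB Require Import structures.
From mathcomp Require Import all_boot all_order all_algebra.
From mathcomp Require Import complex reals.
Set Implicit Arguments. Unset Strict Implicit. Unset Printing Implicit Defensive.
Import Order.TTheory GRing.Theory Num.Theory.
Local Open Scope ring_scope.

Definition cinner (R : realType) (N : nat) (x y : 'rV[R[i]]_N) : R[i] :=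
  \sum_(k < N) x 0 k * (y 0 k)^*.

Definition frame_mx (R : realType) (N M : nat) (f : 'I_M -> 'rV[R[i]]_N)
  : 'M[R[i]]_(M, N) := \matrix_(k < M) f k.

Definition is_frame (R : realType) (N M : nat) (f : 'I_M -> 'rV[R[i]]_N) : Prop :=
  row_full (frame_mx f).

(* injectivity of the phase retrieval map M^F on C^N / {|c| = 1} *)
Definition phase_injective (R : realType) (N M : nat) (f : 'I_M -> 'rV[R[i]]_N)
  : Prop :=
  forall x y : 'rV[R[i]]_N,
    (forall k : 'I_M, `|cinner x (f k)| = `|cinner y (f k)|) ->
    exists c : R[i], `|c| = 1 /\ y = c *: x.

(* Main.v *)
Require Import Defs.
From HB Require Import structures.
From mathcomp Require Import all_boot all_order all_algebra.
From mathcomp Require Import complex reals.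
From mathcomp Require Import ring.
Import Order.TTheory GRing.Theory Num.Theory.
Local Notation conjC := Num.Def.conjC.
Local Open Scope ring_scope.

Lemma ker_exists (K : fieldType) n m (A : 'M[K]_(n, m)) :
  (m < n)%N -> exists2 w : 'rV_n, w != 0 & w *m A = 0.
Proof.
move=> ltmn.
have : kermx A != 0.
  rewrite -mxrank_eq0 mxrank_ker subn_eq0 -ltnNge.
  exact: leq_ltn_trans (rank_leq_col A) ltmn.
move=> nz.
have [i Hi] : exists i, row i (kermx A) != 0.
  apply/existsP; apply: contraR nz => /existsPn H.
  apply/eqP/row_matrixP => i; rewrite row0; exact/eqP/negbNE/H.
exists (row i (kermx A)) => //.
by rewrite -row_mul mulmx_ker row0.
Qed.
Arguments ker_exists {K n m}.

Section Aux.
Variables (R : realType) (N : nat).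
Local Notation C := R[i].

Lemma cinnerD (x y z : 'rV[C]_N) : cinner (x + y) z = cinner x z + cinner y z.
Proof. by rewrite /cinner -big_split; apply: eq_bigr => j _; rewrite mxE mulrDl. Qed.

Lemma cinnerB (x y z : 'rV[C]_N) : cinner (x - y) z = cinner x z - cinner y z.
Proof.
rewrite /cinner -sumrB; apply: eq_bigr => j _; rewrite !mxE mulrBl //.
Qed.

Lemma cinnerZ a (x z : 'rV[C]_N) : cinner (a *: x) z = a * cinner x z.
Proof. by rewrite /cinner mulr_sumr; apply: eq_bigr => j _; rewrite mxE mulrA. Qed.

Lemma cinner_ge0 (x : 'rV[C]_N) : 0 <= cinner x x.
Proof. by apply: sumr_ge0 => j _; rewrite -normCK exprn_ge0. Qed.

Lemma cinner_eq0 (x : 'rV[C]_N) : cinner x x = 0 -> x = 0.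
Proof.
move=> H; apply/matrixP => i j; rewrite mxE.
have Hn : forall k : 'I_N, true -> 0 <= x 0 k * (x 0 k)^*.
  by move=> k _; rewrite -normCK exprn_ge0.
have := @psumr_eq0P _ _ _ _ Hn H j isT.
rewrite ord1 -normCK => /eqP.
by rewrite expf_eq0 /= normr_eq0 => /eqP.
Qed.

Lemma double_eq0 (u : 'rV[C]_N) : u + u = 0 -> u = 0.
Proof.
move=> H; apply/matrixP => i j; move/matrixP: H => /(_ i j); rewrite !mxE.
by move/eqP; rewrite -mulr2n mulrn_eq0 /= => /eqP.
Qed.

Lemma norm_eq (p q : C) : p^* * q + (p^* * q)^* = 0 -> `|p + q| = `|p - q|.
Proof.
move=> H; apply/eqP; rewrite -(@eqrXn2 _ 2) // !normCK rmorphD rmorphB /=.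
rewrite rmorphM /= conjCK in H.
rewrite -subr_eq0; apply/eqP.
have -> : (p + q) * (p^* + q^*) - (p - q) * (p^* - q^*) = 2%:R * (p^* * q + p * q^*) by ring.
by rewrite H mulr0.
Qed.

End Aux.

Lemma zmod4 (V : zmodType) (a b c d : V) : (a - b) - (c - d) = (a + d) - (b + c).
Proof. by rewrite opprB addrACA opprD. Qed.

Lemma mapJJ (R : realType) m n (A : 'M[R[i]]_(m, n)) :
  map_mx conjC (map_mx conjC A) = A.
Proof. by apply/matrixP => i j; rewrite !mxE conjCK. Qed.

Lemma mapJZ (R : realType) m n a (A : 'M[R[i]]_(m, n)) :
  map_mx conjC (a *: A) = conjC a *: map_mx conjC A.
Proof. by apply/matrixP => i j; rewrite !mxE rmorphM. Qed.

Lemma mapJB (R : realType) m n (A B : 'M[R[i]]_(m, n)) :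
  map_mx conjC (A - B) = map_mx conjC A - map_mx conjC B.
Proof. by apply/matrixP => i j; rewrite !mxE rmorphB. Qed.

Theorem proposition3p6 (R : realType) (N M : nat) (f : 'I_M -> 'rV[R[i]]_N) :
  (2 <= N)%N -> is_frame f -> phase_injective f -> (2 * N <= M)%N.
Proof.
move=> N2 _ inj; rewrite leqNgt; apply/negP => ltM.
have cinner0 : forall z, cinner (0 : 'rV[R[i]]_N) z = 0.
  by move=> z; rewrite /cinner big1 // => j _; rewrite mxE mul0r.
have H0 : forall x : 'rV[R[i]]_N, (forall k, cinner x (f k) = 0) -> x = 0.
  move=> x Hx; have [c [c1 E]] := inj x 0 (fun k => ltac:(by rewrite Hx cinner0)).
  move/esym/eqP: E; rewrite scaler_eq0 => /orP [/eqP c0|/eqP //].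
  by move: c1; rewrite c0 normr0 => /eqP; rewrite eq_sym oner_eq0.
case: M f inj ltM H0 => [|M] f inj ltM H0.
  have N0 : (0 < N)%N by apply: leq_trans N2.
  have /matrixP/(_ 0 (Ordinal N0)) : const_mx 1 = 0 :> 'rV[R[i]]_N.
    by apply: H0; case.
  by rewrite !mxE => /eqP; rewrite oner_eq0.
set k0 := (ord0 : 'I_M.+1).
pose B : 'M[R[i]]_(N,1) := \matrix_(j, l) (f k0 0 j)^*.
have [x xnz xB] := ker_exists B (N2 : (1 < N)%N).
have xf0 : cinner x (f k0) = 0.
  move/matrixP: xB => /(_ 0 0); rewrite !mxE => H; rewrite -H /cinner.
  by apply: eq_bigr => j _; rewrite mxE.
pose G : 'M[R[i]]_(N, M.+1) := \matrix_(j, k)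
  if k == k0 then 'i * (x 0 j)^* else (cinner x (f k))^* * (f k 0 j)^*.
have ltA : (M.+1 < N + N)%N by rewrite addnn -mul2n.
have [w wnz Hw] := ker_exists (col_mx G (map_mx conjC G)) ltA.
set s := lsubmx w; set t := rsubmx w.
have Hst : s *m G + t *m map_mx conjC G = 0 by rewrite -mul_row_col hsubmxK.
have Hst' : map_mx conjC t *m G + map_mx conjC s *m map_mx conjC G = 0.
  have := congr1 (map_mx conjC) Hst; rewrite map_mxD !map_mxM map_mx0 mapJJ.
  by rewrite addrC.
have [v vnz Hv] : exists2 v : 'rV_N, v != 0 &
    v *m G + map_mx conjC v *m map_mx conjC G = 0.
  case: (eqVneq (s + map_mx conjC t) 0) => h1; last first.
    exists (s + map_mx conjC t) => //.
    rewrite map_mxD mapJJ !mulmxDl.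
    rewrite [map_mx conjC s *m _ + _]addrC addrACA Hst Hst' addr0 //.
  exists ('i *: (s - map_mx conjC t)).
    rewrite scaler_eq0 negb_or neq0Ci /=.
    apply: contraNneq wnz => h2.
    have s0 : s = 0.
      apply: double_eq0.
      have : (s + map_mx conjC t) + (s - map_mx conjC t) = 0 by rewrite h1 h2 addr0.
      by rewrite addrACA subrr addr0.
    have t0 : t = 0.
      by rewrite -[t]mapJJ; move: h1; rewrite s0 add0r => ->; rewrite map_mx0.
    by rewrite -[w]hsubmxK -/s -/t s0 t0 row_mx0.
  rewrite mapJZ mapJB mapJJ conjCi -!scalemxAl !mulmxBl scaleNr -scalerBr.
  by rewrite zmod4 Hst Hst' subrr scaler0.
have Hk : forall k, (v *m G) 0 k + conjC ((v *m G) 0 k) = 0.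
  move=> k; have := congr1 (fun A : 'M[R[i]]_(1, M.+1) => A 0 k) Hv => /=.
  rewrite -map_mxM [LHS]mxE [X in _ + X = _ -> _]mxE [RHS]mxE //.
have XG : forall k, (v *m G) 0 k = if k == k0 then 'i * cinner v x
    else conjC (cinner x (f k)) * cinner v (f k).
  move=> k; rewrite mxE /cinner; under eq_bigr do rewrite mxE.
  by case: (k == k0); rewrite mulr_sumr; apply: eq_bigr => j _; ring.
have Heq : forall k, `|cinner (x + v) (f k)| = `|cinner (x - v) (f k)|.
  move=> k; rewrite cinnerD cinnerB; case: (eqVneq k k0) => [->|kne].
    by rewrite xf0 add0r sub0r normrN.
  by apply: norm_eq; have := Hk k; rewrite XG (negbTE kne).
have [c [c1 Ec]] := inj _ _ Heq.
have E1 := congr1 (fun z => cinner z x) Ec; rewrite /= cinnerB cinnerZ cinnerD in E1.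
set n := cinner x x in E1; set r := cinner v x in E1.
have nJ : conjC n = n := geC0_conj (@cinner_ge0 _ _ x).
have rJ : conjC r = r.
  have := Hk k0; rewrite XG eqxx rmorphM /= conjCi mulNr -mulrBr => /eqP.
  by rewrite mulf_eq0 (negbTE (neq0Ci _)) /= subr_eq0 => /eqP.
have cc : c * conjC c = 1 by rewrite -normCK c1 expr1n.
have E2 := congr1 conjC E1; rewrite /= rmorphB rmorphM rmorphD /= nJ rJ in E2.
have D1 : n - r - c * (n + r) = 0 by rewrite E1 subrr.
have D2 : n - r - conjC c * (n + r) = 0 by rewrite E2 subrr.
have : (1 - c) * n * 2%:R = 0.
  have -> : (1 - c) * n * 2%:R = (n - r - c * (n + r)) - c * (n - r - conjC c * (n + r))
     - (c * conjC c - 1) * (n + r) by ring.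
  by rewrite D1 D2 cc subrr mulr0 mul0r !subrr.
move/eqP; rewrite !mulf_eq0 pnatr_eq0 orbF => /orP [|/eqP n0]; last first.
  by move: xnz; rewrite (@cinner_eq0 _ _ _ n0) eqxx.
rewrite subr_eq0 => /eqP c1'; rewrite -c1' scale1r in Ec.
have Hneg : - v = v by apply: (addrI x).
have : v + v = 0 by rewrite -[X in X + _]Hneg addNr.
by move/double_eq0 => v0; move: vnz; rewrite v0 eqxx.
Qed.
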